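(* Let $w\in\mathcal{W}^o_n$ and let $(O,E)\to(O',E')$ be one application of the step $(\psi)$ during the computation of $\Psi(w)$, with $O=o_1|\cdots|o_m$ and (when $o_m$ is splittable) $o_m=rs$ its standard factorization, as in the definition of $(\psi)$. Let $O'=o'_1|\cdots|o'_h$ be the Lyndon factorization of $O'$, with the convention $o'_i=\infty$ for $i\le0$. Then: (i) The Lyndon factors of $O'$ are odd and pairwise distinct, and the Lyndon factorization of $O'$ is $o_1|\cdots|o_{m-1}|r$ after a step of type (S), $o_1|\cdots|o_{m-1}|s$ after a step of type (P), and $o_1|\cdots|o_{m-2}$ after a step of type (F). (ii) $E'<o'_{h-1}$. (iii) After a step of type (F), $E'<o'_h$. (iv) After a step of type (P), $E'<o'_h$ and $E<o'_h$. (v) After a step of type (S), $s$ is the leftmost Lyndon factor of $E'$, and $o'_h<s\le E'$. (vi) All the Lyndon factors of $E'$ are even. Moreover, writing $E'=\ell E$ (so $\ell=s$, $r$, or $o_mo_{m-1}$ in cases (S), (P), (F) respectively), the word $\ell$ is contained in the leftmost Lyndon factor of $E'$ (i.e., $|\ell|$ is at most the length of that factor).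
   Context: Fix a finite totally ordered alphabet $A$. Words are finite sequences over $A$; $-$ is the empty word; $\mathcal{W}_n$ is the set of words of length $n$. $<$ is lexicographic order (a proper prefix is smaller than the word); $\infty$ is a formal symbol with $w<\infty$ for all words $w$. A Lyndon word is a nonempty word strictly smaller than each of its proper nonempty suffixes. Every word has a unique Lyndon factorization $w=\ell_1\cdots\ell_m$ into Lyndon words with $\ell_1\ge\dots\ge\ell_m$, written $\ell_1|\cdots|\ell_m$; the $\ell_i$ are the Lyndon factors. Odd/even refer to lengths. For a Lyndon word $\ell$ with $|\ell|\ge2$, its standard factorization is $\ell=rs$ with $s$ the longest proper suffix of $\ell$ that is Lyndon (equivalently the smallest proper nonempty suffix). $\mathcal{W}^o_n$: words of length $n$ whose Lyndon factors are all odd and pairwise distinct. Computation of $\Psi(w)$ for $w\in\mathcal{W}^o_n$: start with $(O,E)=(w,-)$. While $|O|\ge2$, apply step $(\psi)$: let $O=o_1|\cdots|o_m$ be its Lyndon factorization (with $o_{m-1}=\infty$ if $m=1$). Call $o_m$ splittable if $|o_m|\ge2$ and its standard factorization $o_m=rs$ satisfies $s<o_{m-1}$. Update $(O,E)$ to: (S) $(o_1\cdots o_{m-1}r,\ sE)$ if $o_m$ is splittable and $r$ is odd; (P) $(o_1\cdots o_{m-1}s,\ rE)$ if $o_m$ is splittable and $r$ is even; (F) $(o_1\cdots o_{m-2},\ o_mo_{m-1}E)$ if $o_m$ is not splittable. (If $|O|=1$ is reached, that letter is inserted into $E$ as a new Lyndon factor keeping factors weakly decreasing; this final move is not a step $(\psi)$.)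 When $O$ is empty, $\Psi(w)=E$. *)

(* Defs.v *)
From mathcomp Require Import all_boot all_order.
Set Implicit Arguments. Unset Strict Implicit. Unset Printing Implicit Defensive.
Import Order.TTheory.

Section Words.
Context {d : Order.disp_t} {A : finOrderType d}.

Definition word := seq A.

Fixpoint lexlt (u v : word) : bool :=
  match u, v with
  | [::], [::] => false
  | [::], _ :: _ => true
  | _ :: _, [::] => false
  | a :: u', b :: v' => (a < b)%O || ((a == b) && lexlt u' v')
  end.

Definition lexle (u v : word) : bool := (u == v) || lexlt u v.

(* words extended with the formal symbol oo (= None), larger than every word *)
Definition olt (x y : option word) : bool :=
  match x, y with
  | Some u, Some v => lexlt u v
  | Some _, None => true
  | None, _ => false
  end.

Definition lyndon (u : word) : bool :=
  (u != [::]) && all (fun k => lexlt u (drop k u)) (iota 1 (size u).-1).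

Definition lfact (w : word) (fs : seq word) : bool :=
  [&& all lyndon fs, sorted (fun x y => lexle y x) fs & flatten fs == w].

(* 1-based access to factors, with o_i = oo for i <= 0 *)
Definition oidx (fs : seq word) (i : nat) : option word :=
  if i is 0 then None else Some (nth [::] fs i.-1).

Definition oddw (u : word) : bool := odd (size u).

Definition Wo (n : nat) (w : word) : Prop :=
  size w = n /\ exists fs, [&& lfact w fs, all oddw fs & uniq fs].

Definition std_fact (l r s : word) : Prop :=
  [/\ l = r ++ s, r != [::], s != [::], lyndon s &
      forall k, 0 < k < size l -> lyndon (drop k l) -> size (drop k l) <= size s].

Definition splittable (om : word) (prev : option word) : Prop :=
  2 <= size om /\ exists r s, std_fact om r s /\ olt (Some s) prev.

Inductive kind := KS of word & word | KP of word & word | KF.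

(* One step (psi) applied to (O,E) where fs is the Lyndon factorization of O:
   psi_data fs E O' E' l k  means  (O,E) -> (O',E') with E' = l ++ E, of kind k *)
Inductive psi_data (fs : seq word) (E : word) : word -> word -> word -> kind -> Prop :=
| PsiS r s : std_fact (last [::] fs) r s -> olt (Some s) (oidx fs (size fs).-1) ->
    odd (size r) ->
    psi_data fs E (flatten (take (size fs).-1 fs) ++ r) (s ++ E) s (KS r s)
| PsiP r s : std_fact (last [::] fs) r s -> olt (Some s) (oidx fs (size fs).-1) ->
    ~~ odd (size r) ->
    psi_data fs E (flatten (take (size fs).-1 fs) ++ s) (r ++ E) r (KP r s)
| PsiF : 2 <= size fs -> ~ splittable (last [::] fs) (oidx fs (size fs).-1) ->
    psi_data fs E (flatten (take (size fs - 2) fs))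
      (last [::] fs ++ nth [::] fs (size fs - 2) ++ E)
      (last [::] fs ++ nth [::] fs (size fs - 2)) KF.

Definition psi_step (O E O' E' : word) : Prop :=
  2 <= size O /\ exists fs l k, lfact O fs /\ psi_data fs E O' E' l k.

Inductive reach (w : word) : word -> word -> Prop :=
| reach0 : reach w w [::]
| reachS O E O' E' : reach w O E -> psi_step O E O' E' -> reach w O' E'.

(* expected Lyndon factorization of O' *)
Definition new_fact (fs : seq word) (k : kind) : seq word :=
  match k with
  | KS r _ => rcons (take (size fs).-1 fs) r
  | KP _ s => rcons (take (size fs).-1 fs) s
  | KF => take (size fs - 2) fs
  end.

End Words.

(* Main.v *)
Require Import Defs.
From mathcomp Require Import all_boot all_order.
From mathcomp Require Import zify.
Set Implicit Arguments. Unset Strict Implicit. Unset Printing Implicit Defensive.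
Import Order.TTheory.

Section Lex.
Context {d : Order.disp_t} {A : finOrderType d}.
Implicit Types u v x y p t w W X g f z l r s E : seq A.
Implicit Types o : option (seq A).
Implicit Types fs gs vs : seq (seq A).

Lemma lexlt_irr u : lexlt u u = false.
Proof. by elim: u => //= a u ->; rewrite ltxx eqxx. Qed.

Lemma lexlt_trans v u x : lexlt u v -> lexlt v x -> lexlt u x.
Proof.
elim: u v x => [|a u IH] [|b v] [|c x] //=.
case/orP=> [ab|/andP[/eqP <- uv]]; case/orP=> [bc|/andP[/eqP <- vx]].
- by rewrite (lt_trans ab bc).
- by rewrite ab.
- by rewrite bc.
- by rewrite eqxx (IH _ _ uv vx) orbT.
Qed.

Lemma lexlt_total u v : u != v -> lexlt u v || lexlt v u.
Proof.
elim: u v => [|a u IH] [|b v] //=.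
case: (eqVneq a b) => [<-|ab].
  rewrite eqseq_cons eqxx /= ltxx /= => /IH. by [].
move=> _; have := lt_total ab; case/orP=> ->; rewrite ?orbT //.
Qed.

Lemma lexlt_asym u v : lexlt u v -> lexlt v u = false.
Proof. move=> uv; apply/negP => vu; have := lexlt_trans uv vu; by rewrite lexlt_irr. Qed.

Lemma lexlt_cat2l p u v : lexlt (p ++ u) (p ++ v) = lexlt u v.
Proof. by elim: p => //= a p ->; rewrite ltxx eqxx. Qed.

Lemma lexlt_prefix u t : t != [::] -> lexlt u (u ++ t).
Proof. by elim: u => [|a u IH] /=; [case: t | move=> /IH ->; rewrite eqxx orbT]. Qed.

Lemma lexlt_nil u : lexlt [::] u = (u != [::]).
Proof. by case: u. Qed.

Lemma lexlt_split u v : lexlt u v ->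
  (exists t, v = u ++ t) \/ (forall x y, lexlt (u ++ x) (v ++ y)).
Proof.
elim: u v => [|a u IH] [|b v] //=.
- by move=> _; left; exists (b :: v).
case/orP=> [ab|/andP[/eqP <- /IH [[t ->]|H]]].
- by right=> x y; rewrite ab.
- by left; exists t.
- by right=> x y; rewrite ltxx eqxx H.
Qed.

Lemma lexlt_long u v : lexlt u v -> size v <= size u ->
  forall x y, lexlt (u ++ x) (v ++ y).
Proof.
move=> uv; case: (lexlt_split uv) => [[t ev]|//].
case: t ev => [|c t] ev; first by move: uv; rewrite ev cats0 lexlt_irr.
by rewrite ev size_cat /= addnS => /leq_ltn_trans/(_ (leqnn _)); rewrite ltnNge leq_addr.
Qed.

Lemma lexle_refl u : lexle u u.
Proof. by rewrite /lexle eqxx. Qed.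

Lemma lexle_lt_trans v u x : lexle u v -> lexlt v x -> lexlt u x.
Proof. by case/orP=> [/eqP ->//|uv vx]; apply: lexlt_trans uv vx. Qed.

Lemma lexlt_le_trans v u x : lexlt u v -> lexle v x -> lexlt u x.
Proof. by move=> uv /orP[/eqP <-//|vx]; apply: lexlt_trans uv vx. Qed.

Lemma lexle_trans v u x : lexle u v -> lexle v x -> lexle u x.
Proof.
move=> /orP[/eqP ->//|uv] vx; apply/orP; right; exact: lexlt_le_trans uv vx.
Qed.

Lemma lexltW u v : lexlt u v -> lexle u v.
Proof. by move=> h; rewrite /lexle h orbT. Qed.

Lemma lexle_prefix u t : lexle u (u ++ t).
Proof. case: t => [|c t]; first by rewrite cats0 lexle_refl. by apply/lexltW/lexlt_prefix. Qed.

Lemma lexleNgt u v : lexle u v = ~~ lexlt v u.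
Proof.
rewrite /lexle; case: (eqVneq u v) => [->|uv] /=; first by rewrite lexlt_irr.
have := lexlt_total uv; case E1: (lexlt u v); case E2: (lexlt v u) => //=.
by rewrite (lexlt_asym E1) in E2.
Qed.

Lemma lexle_neq u v : lexle u v -> u != v -> lexlt u v.
Proof. by case/orP=> [/eqP ->|//]; rewrite eqxx. Qed.


Lemma cat_eq_split x t g X : x ++ t = g ++ X ->
  (exists t', g = x ++ t' /\ t = t' ++ X) \/ (exists x', x = g ++ x' /\ X = x' ++ t).
Proof.
elim: x g => [|a x IH] [|b g] /=.
- by move=> ->; left; exists [::].
- by move=> ->; left; exists (b :: g).
- by move=> <-; right; exists (a :: x).
- case=> <- /IH [[t' [-> ->]]|[x' [-> ->]]]; [left; exists t' | right; exists x']; by [].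
Qed.

Lemma lyndonP u k : lyndon u -> 0 < k < size u -> lexlt u (drop k u).
Proof.
case/andP=> _ /allP H /andP[k0 ks]; apply: H; rewrite mem_iota k0 /= add1n prednK //.
exact: ltn_trans k0 ks.
Qed.

Lemma lyndon_intro u : u != [::] -> (forall k, 0 < k < size u -> lexlt u (drop k u)) -> lyndon u.
Proof.
move=> hu H; apply/andP; split=> //; apply/allP=> k; rewrite mem_iota => /andP[k0 ks].
apply: H; rewrite k0 /=; move: ks k0; case: (size u) => //= m; lia.
Qed.

Lemma lyndon_nil u : lyndon u -> u != [::].
Proof. by case/andP. Qed.

Lemma lyndon_cat_suffix x y : lyndon (x ++ y) -> x != [::] -> y != [::] -> lexlt (x ++ y) y.
Proof.
move=> L hx hy; have := lyndonP (k := size x) L.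
rewrite drop_size_cat // size_cat; apply.
by rewrite lt0n size_eq0 hx /= -{1}(addn0 (size x)) ltn_add2l lt0n size_eq0.
Qed.

Lemma lyndon_cat_suffix_strong x y : lyndon (x ++ y) -> x != [::] -> y != [::] ->
  forall a b, lexlt ((x ++ y) ++ a) (y ++ b).
Proof.
move=> L hx hy; apply: lexlt_long; first exact: lyndon_cat_suffix.
by rewrite size_cat leq_addl.
Qed.

Lemma lyndon_single (a : A) : lyndon [:: a].
Proof. by []. Qed.

Lemma lyndon_cat u v : lyndon u -> lyndon v -> lexlt u v -> lyndon (u ++ v).
Proof.
move=> Lu Lv uv.
have uvv : lexlt (u ++ v) v.
  case: (lexlt_split uv) => [[t ev]|H]; last by have := H v [::]; rewrite cats0.
  case: t ev => [|c t] ev; first by move: uv; rewrite ev cats0 lexlt_irr.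
  rewrite {2}ev lexlt_cat2l; move: Lv; rewrite ev => Lv.
  by apply: lyndon_cat_suffix Lv _ _; [apply: lyndon_nil Lu|].
apply: lyndon_intro; first by rewrite -size_eq0 size_cat addn_eq0 size_eq0 (negbTE (lyndon_nil Lu)).
move=> k /andP[k0 ks]; rewrite drop_cat.
case: ltngtP => hk.
- have := lexlt_long (lyndonP Lu (k := k) _) _ v v; apply; first by rewrite k0.
  by rewrite size_drop leq_subr.
- apply: lexlt_trans uvv _; apply: lyndonP Lv _.
  rewrite size_cat in ks; lia.
- by rewrite hk subnn drop0.
Qed.

Fixpoint lmerge (u : seq A) (fs : seq (seq A)) : seq (seq A) :=
  match fs with
  | [::] => [:: u]
  | f :: fs' => if lexlt u f then lmerge (u ++ f) fs' else u :: fs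
  end.

Definition gel := fun x y : seq A => lexle y x.

Lemma gel_trans : transitive gel.
Proof. by move=> y x z xy yz; rewrite /gel; apply: lexle_trans yz xy. Qed.

Lemma lfact_nil : lfact (@nil A) [::].
Proof. by []. Qed.

Lemma lfact_cons u W fs : lyndon u -> lfact W fs -> lexle (head u fs) u -> lfact (u ++ W) (u :: fs).
Proof.
move=> Lu /and3P[Lfs Sfs /eqP <-] hd; apply/and3P; split => //=.
- by rewrite Lu.
- by case: fs Sfs hd {Lfs} => //= f fs' -> ->.
Qed.

Lemma lfact_tail f fs w : lfact w (f :: fs) -> lfact (flatten fs) fs.
Proof. by case/and3P=> /andP[_ L] /path_sorted S _; apply/and3P. Qed.

Lemma lfact_merge u W fs : lyndon u -> lfact W fs -> lfact (u ++ W) (lmerge u fs).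
Proof.
elim: fs u W => [|f fs IH] u W Lu Hf /=.
  by case/and3P: Hf => _ _ /eqP <- /=; rewrite /lfact /= Lu !cats0 eqxx.
case: ifP => uf.
  have Lf : lyndon f by case/and3P: Hf => /andP[].
  case/and3P: (Hf) => _ _ /eqP <- /=; rewrite catA; apply: IH; first exact: lyndon_cat.
  exact: lfact_tail Hf.
apply: lfact_cons => //=; by rewrite lexleNgt uf.
Qed.

Lemma lfact_exists w : exists fs, lfact w fs.
Proof.
elim: w => [|a w [fs H]]; first by exists [::].
exists (lmerge [:: a] fs); exact: (lfact_merge (u := [:: a]) (lyndon_single a) H).
Qed.

Lemma all_lmerge (P : pred (seq A)) u fs : (forall x y, P x -> P y -> P (x ++ y)) ->
  P u -> all P fs -> all P (lmerge u fs).
Proof.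
move=> HP; elim: fs u => [|f fs IH] u Pu /=; first by rewrite Pu.
case/andP=> Pf Pfs; case: ifP => _; first by apply: IH => //; apply: HP.
by rewrite /= Pu Pf.
Qed.

Lemma head_lmerge u fs : exists t, head [::] (lmerge u fs) = u ++ t.
Proof.
elim: fs u => [|f fs IH] u /=; first by exists [::]; rewrite cats0.
case: ifP => _ /=; last by exists [::]; rewrite cats0.
by case: (IH (u ++ f)) => t ->; exists (f ++ t); rewrite catA.
Qed.

Lemma prefix_flatten x t fs : all lyndon fs -> x != [::] -> x ++ t = flatten fs ->
  exists y z g t', [/\ x = y ++ z, z != [::], g \in fs & g = z ++ t'].
Proof.
elim: fs x t => [|g fs IH] x t /=.
  by move=> _ hx /(congr1 size); rewrite size_cat /= => /eqP; rewrite addn_eq0 size_eq0 (negbTE hx).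
case/andP=> Lg Lfs hx /cat_eq_split [[t' [-> _]]|[x' [ex ef]]].
  by exists [::], x, (x ++ t'), t'; split; rewrite ?mem_head.
case: (eqVneq x' [::]) => [ex'|hx'].
  by exists [::], x, g, [::]; split; rewrite ?mem_head // ex ex' !cats0.
case: (IH x' t Lfs hx' (esym ef)) => y [z [g' [t'' [ex2 hz gin eg]]]].
by exists (g ++ y), z, g', t''; split; rewrite ?in_cons ?gin ?orbT // ex ex2 catA.
Qed.

Lemma lfact_head_max w f fs u t : lfact w (f :: fs) -> lyndon u -> w = u ++ t ->
  size u <= size f.
Proof.
move=> H Lu ew; rewrite leqNgt; apply/negP => hlt.
case/and3P: H => /andP[Lf Lfs] S /eqP ef.
move: ew; rewrite -ef /= => /esym /cat_eq_split [[t' [eu _]]|[x' [eu ex]]].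
  by move: hlt; rewrite eu size_cat ltnNge leq_addr.
have hx' : x' != [::] by move: hlt; rewrite eu size_cat; case: x' {eu ex} => //; rewrite addn0 ltnn.
case: (prefix_flatten Lfs hx' (esym ex)) => y [z [g [t'' [exy hz gin eg]]]].
have uz : lexlt u z.
  move: Lu; rewrite eu exy catA => Lu; apply: lyndon_cat_suffix Lu _ hz.
  by rewrite -size_eq0 size_cat addn_eq0 size_eq0 (negbTE (lyndon_nil Lf)).
have zg : lexle z g by rewrite eg lexle_prefix.
have gf : lexle g f.
  by have := order_path_min gel_trans S; move/allP/(_ g gin).
have fu : lexle f u by rewrite eu lexle_prefix.
have := lexlt_le_trans uz (lexle_trans zg (lexle_trans gf fu)).
by rewrite lexlt_irr.
Qed.

Lemma cat_size_nil x t : size (x ++ t) = size x -> t = [::].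
Proof. by rewrite size_cat => /eqP; rewrite -{2}[size x]addn0 eqn_add2l size_eq0 => /eqP. Qed.

Lemma lfact_uniq w fs gs : lfact w fs -> lfact w gs -> fs = gs.
Proof.
elim: fs w gs => [|f fs IH] w [|g gs] //.
- move=> /and3P[_ _ /eqP <-] /and3P[/andP[Lg _] _ /eqP /(congr1 size) /=].
  rewrite size_cat; move: (lyndon_nil Lg); rewrite -size_eq0 => H1 /eqP; by rewrite addn_eq0 (negbTE H1).
- move=> /and3P[/andP[Lf _] _ /eqP <-] /and3P[_ _ /eqP /(congr1 size) /=].
  rewrite size_cat; move: (lyndon_nil Lf); rewrite -size_eq0 => H1 /esym/eqP; by rewrite addn_eq0 (negbTE H1).
move=> Hf Hg.
have Lf : lyndon f by case/and3P: Hf => /andP[].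
have Lg : lyndon g by case/and3P: Hg => /andP[].
have ef : w = f ++ flatten fs by case/and3P: Hf => _ _ /eqP <-.
have eg : w = g ++ flatten gs by case/and3P: Hg => _ _ /eqP <-.
have h1 := lfact_head_max Hf Lg eg.
have h2 := lfact_head_max Hg Lf ef.
have sz : size f = size g by apply/eqP; rewrite eqn_leq h1 h2.
move: (ef); rewrite eg => /cat_eq_split [[t' [e1 e2]]|[x' [e1 e2]]].
- move: sz; rewrite e1 => /cat_size_nil ht; move: e1 e2; rewrite ht cats0 => _ e2.
  have Tg := lfact_tail Hg; rewrite e2 /= in Tg.
  by rewrite (IH _ _ (lfact_tail Hf) Tg).
- move: sz; rewrite e1 => /esym/cat_size_nil ht; move: e1 e2; rewrite ht cats0 => _ e2.
  have Tf := lfact_tail Hf; rewrite e2 /= in Tf.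
  by rewrite (IH _ _ Tf (lfact_tail Hg)).
Qed.

Lemma lfact_rconsE W fs u : lfact W (rcons fs u) ->
  [/\ lfact (flatten fs) fs, lyndon u, W = flatten fs ++ u & forall x, x \in fs -> lexle u x].
Proof.
case/and3P=> L S /eqP <-; move: L S; rewrite all_rcons (sorted_pairwise gel_trans) pairwise_rcons.
case/andP=> Lu Lfs /andP[/allP Hu Pfs]; split=> //; last by rewrite flatten_rcons.
by apply/and3P; split=> //; rewrite (sorted_pairwise gel_trans).
Qed.

Lemma lfact_rcons W fs u : lfact W fs -> lyndon u -> (forall x, x \in fs -> lexle u x) ->
  lfact (W ++ u) (rcons fs u).
Proof.
case/and3P=> Lfs S /eqP <- Lu Hu; apply/and3P; split.
- by rewrite all_rcons Lu.
- rewrite (sorted_pairwise gel_trans) pairwise_rcons -(sorted_pairwise gel_trans) S andbT.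
  by apply/allP.
- by rewrite flatten_rcons.
Qed.

Lemma oidx_rcons_last fs x : oidx (rcons fs x) (size fs).+1 = Some x.
Proof. by rewrite /= nth_rcons ltnn eqxx. Qed.

Lemma oidx_rcons fs x i : i <= size fs -> oidx (rcons fs x) i = oidx fs i.
Proof. by case: i => //= i hi; rewrite nth_rcons hi. Qed.

Lemma oidx_mem fs i x : i <= size fs -> oidx fs i = Some x -> x \in fs.
Proof. by case: i => //= i hi [<-]; apply: mem_nth. Qed.

Lemma olt_oidx u fs i : (forall x, x \in fs -> lexlt u x) -> i <= size fs -> olt (Some u) (oidx fs i).
Proof. by case: i => //= i H hi; apply: H; apply: mem_nth. Qed.

Lemma last_mem y fs : fs != [::] -> last y fs \in fs.
Proof. by case/lastP: fs => // s x _; rewrite last_rcons mem_rcons mem_head. Qed.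

Lemma lexlt_catl x u E : lyndon x -> lexlt u x -> lexlt E x -> lexlt (u ++ E) x.
Proof.
move=> Lx ux Ex; case: (eqVneq u [::]) => [-> //|hu].
case: (lexlt_split ux) => [[t et]|H]; last by have := H E [::]; rewrite cats0.
case: t et => [|c t] et; first by move: ux; rewrite et cats0 lexlt_irr.
rewrite et lexlt_cat2l; apply: lexlt_trans Ex _.
by move: Lx; rewrite et => Lx; apply: lyndon_cat_suffix Lx _ _.
Qed.

Lemma olt_catl o u E : (forall x, o = Some x -> lyndon x) -> olt (Some u) o -> olt (Some E) o ->
  olt (Some (u ++ E)) o.
Proof. by case: o => //= x H; apply: lexlt_catl; apply: H. Qed.

Lemma lexlt_flatten x vs E : lyndon x -> (forall u, u \in vs -> lexlt u x) -> lexlt E x ->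
  lexlt (flatten vs ++ E) x.
Proof.
move=> Lx; elim: vs => [|v vs IH] //= H Ex; rewrite -catA; apply: lexlt_catl => //.
  by apply: H; rewrite mem_head.
by apply: IH => // u uin; apply: H; rewrite in_cons uin orbT.
Qed.

Lemma std_r_lyndon l r s : lyndon l -> std_fact l r s -> lyndon r.
Proof.
move=> Ll [el hr hs Ls Mx].
case: (lfact_exists r) => fr Hr.
case/lastP: fr Hr => [|fr1 rk] Hr.
  by case/and3P: Hr => _ _ /eqP er; move: hr; rewrite -er eqxx.
case: (lfact_rconsE Hr) => Hfr1 Lrk er _.
case: (eqVneq fr1 [::]) => [e1|ne1]; first by move: er; rewrite e1 /= => ->.
have hfr1 : flatten fr1 != [::].
  move: ne1 Hfr1; case: fr1 {Hr er} => // f fr' _ /and3P[/andP[Lf _] _ _] /=.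
  rewrite -size_eq0 size_cat.
  by move: (lyndon_nil Lf); rewrite -size_eq0 -!lt0n => /ltn_addr ->.
case: (boolP (lexlt rk s)) => rks.
  have Lrks := lyndon_cat Lrk Ls rks.
  have := Mx (size (flatten fr1)).
  rewrite el er -catA drop_size_cat // => /(_ _ Lrks); rewrite !size_cat.
  have hrk := lyndon_nil Lrk; move: hfr1 hrk; rewrite -!size_eq0 -!lt0n => h1 h2.
  have -> : 0 < size (flatten fr1) < size (flatten fr1) + (size rk + size s).
    by rewrite h1 /= -{1}[size (flatten fr1)]addn0 ltn_add2l addn_gt0 h2.
  move/(_ isT); rewrite -{2}[size s]add0n leq_add2r leqn0 => /eqP h0.
  by move: h2; rewrite h0.
have Hl : lfact l (rcons (rcons fr1 rk) s).
  rewrite el; apply: lfact_rcons => // x; rewrite mem_rcons in_cons => /orP[/eqP ->|xin].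
    by rewrite lexleNgt.
  case: (lfact_rconsE Hr) => _ _ _ /(_ x xin) H.
  by apply: lexle_trans H; rewrite lexleNgt.
have Hl1 : lfact l [:: l] by apply/and3P; rewrite /= Ll cats0.
have := lfact_uniq Hl Hl1; move/(congr1 size); rewrite !size_rcons.
by case: fr1 ne1 {Hfr1 Hr er hfr1 Hl}.
Qed.

Lemma even_cat x y : ~~ oddw x -> ~~ oddw y -> ~~ oddw (x ++ y).
Proof. by rewrite /oddw size_cat oddD => /negbTE -> /negbTE ->. Qed.

Lemma take_rcons_pred fs x : take (size (rcons fs x)).-1 (rcons fs x) = fs.
Proof. by rewrite size_rcons /= -cats1 take_size_cat. Qed.

Lemma Fsimp fs a b : [/\ size (rcons (rcons fs a) b) - 2 = size fs,
   take (size fs) (rcons (rcons fs a) b) = fs &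
   nth [::] (rcons (rcons fs a) b) (size fs) = a].
Proof.
split.
- by rewrite !size_rcons subSS subSS subn0.
- by rewrite -cats1 -cats1 -catA take_size_cat.
- by rewrite nth_rcons size_rcons ltnSn nth_rcons ltnn eqxx.
Qed.

Definition InvF fs E : Prop :=
  [/\ lfact (flatten fs) fs, all oddw fs, uniq fs,
      olt (Some E) (oidx fs (size fs).-1) &
      exists vs gs, [/\ lfact E (vs ++ gs), all (fun u => ~~ oddw u) (vs ++ gs),
         (fs != [::] -> lexlt (flatten gs) (last [::] fs ++ flatten vs)) &
         (forall k, 0 < k < size (last [::] fs) -> lyndon (drop k (last [::] fs)) ->
            forall x, x \in vs -> lexle x (drop k (last [::] fs)))]].

Definition Concl fs E O' E' l k : Prop :=
  let fs' := new_fact fs k in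
  let h := size fs' in
  [/\ lfact O' fs', all oddw fs' & uniq fs'] /\
  olt (Some E') (oidx fs' h.-1) /\
  (k = KF -> olt (Some E') (oidx fs' h)) /\
  (forall r s, k = KP r s -> olt (Some E') (oidx fs' h) /\ olt (Some E) (oidx fs' h)) /\
  (forall r s, k = KS r s ->
     (forall fsE, lfact E' fsE -> head [::] fsE = s) /\
     olt (oidx fs' h) (Some s) /\ lexle s E') /\
  (forall fsE, lfact E' fsE ->
     all (fun u => ~~ oddw u) fsE /\ size l <= size (head [::] fsE)).

Lemma rcons_facts fs1 om : lfact (flatten (rcons fs1 om)) (rcons fs1 om) ->
  uniq (rcons fs1 om) ->
  [/\ lfact (flatten fs1) fs1, lyndon om, uniq fs1,
      forall x, x \in fs1 -> lexlt om x & forall x, x \in fs1 -> lyndon x].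
Proof.
move=> H; case: (lfact_rconsE H) => H1 Lom _ Hx; rewrite rcons_uniq => /andP[nin U1].
split=> // x xin; first by apply: lexle_neq (Hx x xin) _; apply: contraNneq nin => ->.
by case/and3P: H1 => /allP/(_ x xin).
Qed.

Lemma rcons_neq0 fs x : rcons fs x != [::].
Proof. by case: fs. Qed.

Lemma caseS fs1 om E r s :
  InvF (rcons fs1 om) E -> std_fact om r s -> olt (Some s) (oidx fs1 (size fs1)) -> odd (size r) ->
  Concl (rcons fs1 om) E (flatten fs1 ++ r) (s ++ E) s (KS r s) /\ InvF (rcons fs1 r) (s ++ E).
Proof.
move=> [Lfs Ofs Ufs Cp [vs [gs [LE EvE Hgs Hvs]]]] st sp hodd.
have st' := st; case: st' => eom hr hs Ls Mx.
have [Lfs1 Lom U1 ltom Lx] := rcons_facts Lfs Ufs.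
rewrite last_rcons in Hgs Hvs; have {}Hgs := Hgs (rcons_neq0 _ _).
rewrite size_rcons /= oidx_rcons // in Cp.
have Lr := std_r_lyndon Lom st.
have r_om : lexlt r om by rewrite eom; apply: lexlt_prefix.
have om_s : lexlt om s by rewrite eom; apply: lyndon_cat_suffix; rewrite -?eom.
have r_s := lexlt_trans r_om om_s.
have oom : odd (size om) by move: Ofs; rewrite all_rcons => /andP[].
have es : ~~ oddw s by move: oom; rewrite /oddw eom size_cat oddD hodd.
have hsr : 0 < size r < size om.
  rewrite eom size_cat lt0n size_eq0 hr /= -{1}[size r]addn0 ltn_add2l lt0n size_eq0 //.
have dom : drop (size r) om = s by rewrite eom drop_size_cat.
have Hvs_s : forall x, x \in vs -> lexle x s.
  by move=> x xin; rewrite -dom; apply: Hvs; rewrite ?dom.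
have HE' : lfact (s ++ E) (s :: (vs ++ gs)).
  apply: lfact_cons => //; case: vs Hvs_s Hgs {Hvs EvE LE} => [|x vs'] Hv Hg /=.
    case: gs Hg => [|g gs'] Hg /=; first exact: lexle_refl.
    apply: lexltW; apply: lexle_lt_trans (lexle_prefix g (flatten gs')) _.
    by apply: lexlt_trans om_s; move: Hg; rewrite /= cats0.
  by apply: Hv; rewrite mem_head.
have uE : forall fsE, lfact (s ++ E) fsE -> fsE = s :: (vs ++ gs).
  by move=> fsE H; apply: lfact_uniq H HE'.
have ltr : forall x, x \in fs1 -> lexlt r x by move=> x /ltom; apply: lexlt_trans.
have I1 : [/\ lfact (flatten fs1 ++ r) (rcons fs1 r), all oddw (rcons fs1 r) & uniq (rcons fs1 r)].
  split.
  - by apply: lfact_rcons => // x /ltr /lexltW.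
  - by rewrite all_rcons /oddw hodd; move: Ofs; rewrite all_rcons => /andP[].
  - rewrite rcons_uniq U1 andbT; apply/negP => /ltr; by rewrite lexlt_irr.
have I2 : olt (Some (s ++ E)) (oidx fs1 (size fs1)).
  apply: olt_catl => // x ex; apply: Lx; exact: oidx_mem ex.
have fsEeven : all (fun u => ~~ oddw u) (s :: (vs ++ gs)) by rewrite /= es.
split.
  rewrite /Concl /new_fact take_rcons_pred size_rcons succnK (oidx_rcons _ (leqnn (size fs1))).
  rewrite oidx_rcons_last.
  split; first done. split; first done. split; first done. split; first done.
  split.
    move=> r0 s0 [_ <-]; split; last split => //.
    - by move=> fsE /uE ->.
    - exact: lexle_prefix.
  by move=> fsE /uE -> /=; rewrite leqnn; split.
split=> //.
- by rewrite flatten_rcons; case: I1.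
- by case: I1.
- by case: I1.
- by rewrite size_rcons succnK (oidx_rcons _ (leqnn (size fs1))).
exists (s :: vs), gs; split => //.
- by move=> _; rewrite last_rcons /= catA -eom.
move=> k; rewrite last_rcons => hk Ly.
have sy : lexle s (drop k r).
  rewrite lexleNgt; apply/negP => ys.
  have Lys := lyndon_cat Ly Ls ys.
  have := Mx k; rewrite eom drop_cat; case/andP: hk => k0 kr; rewrite kr.
  move/(_ _ Lys); rewrite !size_cat size_drop => H.
  have : 0 < k < size r + size s by rewrite k0 (leq_trans kr) // leq_addr.
  move/H; rewrite -{2}[size s]add0n leq_add2r leqn0 subn_eq0 leqNgt kr //.
move=> x; rewrite in_cons => /orP[/eqP ->//|xin].
exact: lexle_trans (Hvs_s x xin) sy.
Qed.


Lemma prev_lt fs u x : lfact (flatten fs) fs -> x \in fs -> olt (Some u) (oidx fs (size fs)) -> lexlt u x.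
Proof.
case/lastP: fs => [|fs' p] //= H xin; rewrite size_rcons oidx_rcons_last /= => up.
case: (lfact_rconsE H) => _ _ _ Hp; move: xin; rewrite mem_rcons in_cons => /orP[/eqP ->//|xin].
exact: lexlt_le_trans up (Hp x xin).
Qed.

Lemma caseP fs1 om E r s :
  InvF (rcons fs1 om) E -> std_fact om r s -> olt (Some s) (oidx fs1 (size fs1)) -> ~~ odd (size r) ->
  Concl (rcons fs1 om) E (flatten fs1 ++ s) (r ++ E) r (KP r s) /\ InvF (rcons fs1 s) (r ++ E).
Proof.
move=> [Lfs Ofs Ufs Cp [vs [gs [LE EvE Hgs Hvs]]]] st sp hev.
have st' := st; case: st' => eom hr hs Ls Mx.
have [Lfs1 Lom U1 ltom Lx] := rcons_facts Lfs Ufs.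
rewrite last_rcons in Hgs Hvs; have {}Hgs := Hgs (rcons_neq0 _ _).
rewrite size_rcons succnK (oidx_rcons _ (leqnn (size fs1))) in Cp.
have Lr := std_r_lyndon Lom st.
have r_om : lexlt r om by rewrite eom; apply: lexlt_prefix.
have om_s : lexlt om s by rewrite eom; apply: lyndon_cat_suffix; rewrite -?eom.
have r_s := lexlt_trans r_om om_s.
have oom : odd (size om) by move: Ofs; rewrite all_rcons => /andP[].
have so : oddw s by move: oom; rewrite /oddw eom size_cat oddD (negbTE hev).
have hsr : 0 < size r < size om.
  rewrite eom size_cat lt0n size_eq0 hr /= -{1}[size r]addn0 ltn_add2l lt0n size_eq0 //.
have dom : drop (size r) om = s by rewrite eom drop_size_cat.
have Hvs_s : forall x, x \in vs -> lexle x s.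
  by move=> x xin; rewrite -dom; apply: Hvs; rewrite ?dom.
have ltsx : forall x, x \in fs1 -> lexlt s x by move=> x xin; apply: prev_lt Lfs1 xin sp.
have ltr : forall x, x \in fs1 -> lexlt r x by move=> x /ltom; apply: lexlt_trans.
have I1 : [/\ lfact (flatten fs1 ++ s) (rcons fs1 s), all oddw (rcons fs1 s) & uniq (rcons fs1 s)].
  split.
  - by apply: lfact_rcons => // x /ltsx /lexltW.
  - by rewrite all_rcons so; move: Ofs; rewrite all_rcons => /andP[].
  - rewrite rcons_uniq U1 andbT; apply/negP => /ltsx; by rewrite lexlt_irr.
have EE : E = flatten vs ++ flatten gs by case/and3P: LE => _ _ /eqP <-; rewrite flatten_cat.
have Es : lexlt E s.
  rewrite EE; apply: lexlt_flatten => //.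
    move=> u uin; apply: lexle_neq (Hvs_s u uin) _; apply/eqP => eu.
    move: EvE => /allP/(_ u); rewrite mem_cat uin eu so => /(_ isT).
    by [].
  apply: lexlt_trans Hgs _; have := lyndon_cat_suffix_strong (x := r) (y := s).
  by rewrite -eom => /(_ Lom hr hs (flatten vs) [::]); rewrite cats0.
have rEs : lexlt (r ++ E) s by apply: lexlt_catl.
have I2 : olt (Some (r ++ E)) (oidx fs1 (size fs1)).
  apply: olt_catl => //; first by move=> x ex; apply: Lx; exact: oidx_mem ex.
  exact: olt_oidx.
have HE' : lfact (r ++ E) (lmerge r (vs ++ gs)) by apply: lfact_merge.
have uE : forall fsE, lfact (r ++ E) fsE -> fsE = lmerge r (vs ++ gs).
  by move=> fsE H; apply: lfact_uniq H HE'.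
have Ev : all (fun u => ~~ oddw u) (lmerge r (vs ++ gs)) by apply: all_lmerge => //; apply: even_cat.
split.
  rewrite /Concl /new_fact take_rcons_pred size_rcons succnK (oidx_rcons _ (leqnn (size fs1))).
  rewrite oidx_rcons_last.
  split; first done. split; first done. split; first done.
  split; first by move=> r0 s0 _; split.
  split; first done.
  move=> fsE /uE ->; split=> //; case: (head_lmerge r (vs ++ gs)) => t ->.
  by rewrite size_cat leq_addr.
split=> //.
- by rewrite flatten_rcons; case: I1.
- by case: I1.
- by case: I1.
- by rewrite size_rcons succnK (oidx_rcons _ (leqnn (size fs1))).
exists [::], (lmerge r (vs ++ gs)); split => //.
by move=> _; rewrite last_rcons /= cats0; case/and3P: HE' => _ _ /eqP ->.
Qed.

Lemma caseF fs2 a b E :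
  InvF (rcons (rcons fs2 a) b) E ->
  Concl (rcons (rcons fs2 a) b) E (flatten fs2) (b ++ a ++ E) (b ++ a) KF /\ InvF fs2 (b ++ a ++ E).
Proof.
move=> [Lfs Ofs Ufs Cp [vs [gs [LE EvE _ _]]]].
have [Lfs1 Lb U1 ltb Lx] := rcons_facts Lfs Ufs.
have [Lfs2 La U2 lta Lx2] := rcons_facts Lfs1 U1.
have b_a : lexlt b a by apply: ltb; rewrite mem_rcons mem_head.
rewrite size_rcons succnK (oidx_rcons _ (leqnn _)) size_rcons oidx_rcons_last /= in Cp.
have ltE : forall x, x \in fs2 -> lexlt (b ++ a ++ E) x.
  move=> x xin; have Lx' := Lx2 x xin.
  have ax := lta x xin.
  have bx : lexlt b x by apply: ltb; rewrite mem_rcons in_cons xin orbT.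
  apply: lexlt_catl => //; apply: lexlt_catl => //; exact: lexlt_trans ax.
have Lba := lyndon_cat Lb La b_a.
move: Ofs; rewrite !all_rcons => /and3P[ob oa Of2].
have evba : ~~ oddw (b ++ a) by move: ob oa; rewrite /oddw size_cat oddD => -> ->.
have HE' : lfact (b ++ a ++ E) (lmerge (b ++ a) (vs ++ gs)) by rewrite catA; apply: lfact_merge.
have uE : forall fsE, lfact (b ++ a ++ E) fsE -> fsE = lmerge (b ++ a) (vs ++ gs).
  by move=> fsE H; apply: lfact_uniq H HE'.
have Ev : all (fun u => ~~ oddw u) (lmerge (b ++ a) (vs ++ gs)).
  by apply: all_lmerge => //; apply: even_cat.
have I2 : olt (Some (b ++ a ++ E)) (oidx fs2 (size fs2).-1) by apply: olt_oidx => //; apply: leq_pred.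
case: (Fsimp fs2 a b) => e1 e2 _.
split.
  rewrite /Concl /new_fact e1 e2.
  split; first done. split; first done.
  split; first by move=> _; apply: olt_oidx.
  split; first done. split; first done.
  move=> fsE /uE ->; split=> //; case: (head_lmerge (b ++ a) (vs ++ gs)) => t ->.
  by rewrite size_cat [X in _ <= X]size_cat size_cat leq_addr.
split=> //.
exists [::], (lmerge (b ++ a) (vs ++ gs)); split => //.
move=> ne; rewrite cats0; case/and3P: (HE') => _ _ /eqP ->.
by apply: ltE; apply: last_mem.
Qed.

Lemma step fs E O' E' l k : InvF fs E -> psi_data fs E O' E' l k ->
  Concl fs E O' E' l k /\ InvF (new_fact fs k) E'.
Proof.
move=> I; case=> [r s st sp hodd|r s st sp hev|h2 _].
- case/lastP: fs I st sp => [|fs1 om] I st sp.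
    by case: st => /(congr1 size) /= /esym/eqP; rewrite size_cat addn_eq0 size_eq0 => /andP[/eqP -> _]; rewrite eqxx.
  rewrite last_rcons in st; rewrite size_rcons succnK (oidx_rcons _ (leqnn _)) in sp.
  rewrite take_rcons_pred; have [C I'] := caseS I st sp hodd.
  by split=> //; rewrite /new_fact take_rcons_pred.
- case/lastP: fs I st sp => [|fs1 om] I st sp.
    by case: st => /(congr1 size) /= /esym/eqP; rewrite size_cat addn_eq0 size_eq0 => /andP[/eqP -> _]; rewrite eqxx.
  rewrite last_rcons in st; rewrite size_rcons succnK (oidx_rcons _ (leqnn _)) in sp.
  rewrite take_rcons_pred; have [C I'] := caseP I st sp hev.
  by split=> //; rewrite /new_fact take_rcons_pred.
- case/lastP: fs I h2 => [|fs1 b] //; case/lastP: fs1 => [|fs2 a] // I _.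
  case: (Fsimp fs2 a b) => e1 e2 e3.
  rewrite last_rcons e1 e2 e3; have [C I'] := caseF I.
  by split=> //; rewrite /new_fact e1 e2.
Qed.

Lemma reach_inv n w O E : Wo n w -> reach w O E -> forall fs, lfact O fs -> InvF fs E.
Proof.
move=> [_ [fs0 /and3P[L0 O0 U0]]]; elim => [|O1 E1 O2 E2 _ IH [h2 [fs1 [l [k [Lf Hp]]]]]] fs Lfs.
- have efs := lfact_uniq Lfs L0; subst fs.
  have Lx : forall x, x \in fs0 -> lyndon x by case/and3P: L0 => /allP.
  split=> //.
  + by case/and3P: (L0) => _ _ /eqP ->.
  + by apply: olt_oidx; [move=> x /Lx /lyndon_nil; rewrite lexlt_nil | apply: leq_pred].
  exists [::], [::]; split=> //.
  move=> ne; rewrite cats0 lexlt_nil; exact: lyndon_nil (Lx _ (last_mem _ ne)).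
- have [C I'] := step (IH fs1 Lf) Hp.
  have -> // : fs = new_fact fs1 k.
  by case: C => [[L1 _ _] _]; apply: lfact_uniq Lfs L1.
Qed.

End Lex.

Theorem lemma4p21 (d : Order.disp_t) (A : finOrderType d) (n : nat) (w : seq A)
  (O E : seq A) (fs : seq (seq A)) (O' E' l : seq A) (k : kind) :
  Wo n w -> reach w O E -> 2 <= size O -> lfact O fs ->
  psi_data fs E O' E' l k ->
  let fs' := new_fact fs k in
  let h := size fs' in
  (* (i) *)
  [/\ lfact O' fs', all oddw fs' & uniq fs'] /\
  (* (ii) *)
  olt (Some E') (oidx fs' h.-1) /\
  (* (iii) *)
  (k = KF -> olt (Some E') (oidx fs' h)) /\
  (* (iv) *)
  (forall r s, k = KP r s -> olt (Some E') (oidx fs' h) /\ olt (Some E) (oidx fs' h)) /\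
  (* (v) *)
  (forall r s, k = KS r s ->
     (forall fsE, lfact E' fsE -> head [::] fsE = s) /\
     olt (oidx fs' h) (Some s) /\ lexle s E') /\
  (* (vi) *)
  (forall fsE, lfact E' fsE ->
     all (fun u => ~~ oddw u) fsE /\ size l <= size (head [::] fsE)).
Proof.
move=> HW HR _ Lfs Hp.
have I := reach_inv HW HR Lfs.
by have [C _] := step I Hp; exact: C.
Qed.
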